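(* Let $F$ be a once-punctured torus equipped with a point of the decorated super Teichmüller space $S\tilde T(F)$, with super semi-perimeter $h$. Let $\Omega$ be the infinite trivalent tree whose vertices are the ideal triangulations of $F$ and whose edges join triangulations related by a flip; each edge corresponds to the pair of arcs $\{a,b\}$ common to its two endpoint triangulations. For an oriented edge $\vec e$ with common arcs $a,b$ whose head is the triangulation $\{a,b,c\}$, set \[ \psi(\vec e)=\frac1h\left(\frac{c}{ab}+\frac{W_a}{2a}+\frac{W_b}{2b}\right). \] Then for any finite subtree $T$ of $\Omega$, \[ \sum_{\vec e\in\mathcal C(T)}\psi(\vec e)=1, \] where $\mathcal C(T)$ is the set of oriented edges of $\Omega$ whose head lies in $T$ and whose tail lies outside $T$.
   Context: Letters $a,b,c$ denote both ideal arcs and their super $\lambda$-lengths. $S\tilde T(F)$ is the decorated $\mathrm{OSp}(1|2)$ super Teichmüller space (Penner–Zeitlin), with values in a real Grassmann algebra: a point assigns, for each ideal triangulation of $F$ (three disjoint non-isotopic ideal arcs cutting $F$ into two ideal triangles), an even $\lambda$-length with positive body to each arc (depending only on the arc), an odd $\mu$-invariant to each triangle, and a spin structure orienting each arc. For an arc $e$, $W_e=\theta_1\theta_2$ with $\theta_1,\theta_2$ the $\mu$-invariants of the triangles adjacent to $e$ counter-clockwise and clockwise of $e$ relative to its spin orientation (independent of the triangulation). Flipping $c$ in $\{a,b,c\}$ gives $d$ with $cd=a^2+b^2+abW_c$. The super semi-perimeter is $h=\frac{a}{bc}+\frac{b}{ac}+\frac{c}{ab}+\frac{W_a}{a}+\frac{W_b}{b}+\frac{W_c}{c}$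 for any triangulation $\{a,b,c\}$, independent of the triangulation. *)

(* Defs.v *)
From HB Require Import structures.
From mathcomp Require Import all_boot all_order all_algebra.
From mathcomp Require Import finmap.
Set Implicit Arguments. Unset Strict Implicit. Unset Printing Implicit Defensive.
Import Order.TTheory GRing.Theory Num.Theory.
Local Open Scope fset_scope.
Local Open Scope ring_scope.

(* Ideal arcs of the once-punctured torus F = (R^2 \ Z^2)/Z^2 are indexed by
   their slopes: primitive integer vectors (p,q) up to sign, normalised by
   q > 0, or (p,q) = (1,0).                                                  *)
Definition is_arc (v : int * int) : bool :=
  (gcdz v.1 v.2 == 1%N) && ((0 < v.2) || ((v.2 == 0) && (v.1 == 1))).

Definition iarc := {v : int * int | is_arc v}.

(* Geometric intersection number of two arcs is |det|; two distinct arcs are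
   disjoint (non-isotopic, non-crossing) iff |det| = 1. *)
Definition arc_det (u v : iarc) : int :=
  (val u).1 * (val v).2 - (val u).2 * (val v).1.

Definition disjoint_arcs (u v : iarc) : bool :=
  (arc_det u v == 1) || (arc_det u v == -1).

Definition tri := {fset iarc}.

Definition is_tri (t : tri) : bool :=
  (#|` t| == 3)%N &&
  [forall x : t, forall y : t, (val x != val y) ==> disjoint_arcs (val x) (val y)].

(* Edges of Omega: two triangulations are related by a flip iff they share
   exactly two arcs. *)
Definition flip_adj (t t' : tri) : bool :=
  [&& is_tri t, is_tri t' & #|` (t `&` t')| == 2]%N.

Definition finite_subtree (T : {fset tri}) : bool :=
  (T != fset0) && [forall u : T, is_tri (val u)] &&
  [forall u : T, forall v : T,
     connect (fun x y : T => flip_adj (val x) (val y)) u v].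

(* Oriented edges are pairs (tail, head). The boundary C(T): head in T,
   tail outside T. *)
Definition in_boundary (T : {fset tri}) (e : tri * tri) : bool :=
  [&& flip_adj e.1 e.2, e.2 \in T & e.1 \notin T].

(* A point of the decorated super Teichmueller space is recorded through the
   data the statement uses, in the even part E of the real Grassmann algebra:
   lam e (super lambda-length of iarc e), W e (= theta1 theta2).            *)

Definition semi_perimeter (E : comUnitRingType) (lam W : iarc -> E)
    (a b c : iarc) : E :=
  lam a / (lam b * lam c) + lam b / (lam a * lam c) + lam c / (lam a * lam b)
  + W a / lam a + W b / lam b + W c / lam c.

(* psi of the oriented edge e = (tail, head): with {a,b} = tail `&` head
   (the common arcs) and {c} = head `\` tail,
     psi e = h^-1 * (c/(ab) + W_a/(2a) + W_b/(2b)).                          *)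
Definition psi (E : comUnitRingType) (lam W : iarc -> E) (h : E)
    (e : tri * tri) : E :=
  h^-1 * ( (\prod_(x <- e.2 `\` e.1) lam x) / (\prod_(x <- e.1 `&` e.2) lam x)
           + \sum_(x <- e.1 `&` e.2) W x / (2 * lam x) ).

(* Main.v *)
Require Import Defs.
From HB Require Import structures.
From mathcomp Require Import all_boot all_order all_algebra.
From mathcomp Require Import finmap.
From mathcomp Require Import zify.
From mathcomp.algebra_tactics Require Import ring.
Import Order.TTheory GRing.Theory Num.Theory.
Local Open Scope fset_scope.
Local Open Scope ring_scope.

Set Implicit Arguments. Unset Strict Implicit.

Definition pm1 (x : int) := x = 1 \/ x = -1.

Definition Qf (v : int * int) : int := v.1 * v.1 + v.1 * v.2 + v.2 * v.2.
Definition Bt (u v : int * int) : int :=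
  2 * u.1 * v.1 + u.1 * v.2 + u.2 * v.1 + 2 * u.2 * v.2.

Definition lc (al be : int) (u v : int * int) : int * int :=
  (al * u.1 + be * v.1, al * u.2 + be * v.2).

Lemma arc_detC (u v : iarc) : arc_det v u = - arc_det u v.
Proof. rewrite /arc_det; ring. Qed.

Lemma disjC (u v : iarc) : disjoint_arcs u v = disjoint_arcs v u.
Proof.
by rewrite /disjoint_arcs (arc_detC u v) !eqr_oppLR opprK orbC.
Qed.

Lemma disjP (u v : iarc) : disjoint_arcs u v -> pm1 (arc_det u v).
Proof. by case/orP => /eqP ->; [left|right]. Qed.

Lemma pm1_disj (u v : iarc) : pm1 (arc_det u v) -> disjoint_arcs u v.
Proof. by rewrite /disjoint_arcs; case => ->; rewrite eqxx ?orbT. Qed.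

Lemma disj_neq (u v : iarc) : disjoint_arcs u v -> u != v.
Proof.
move=> /disjP h; apply/eqP => e; subst v; move: h.
rewrite /arc_det /pm1 mulrC [_ * (val u).1]mulrC subrr; lia.
Qed.

Lemma arc_not_neg (x y : iarc) :
  (val x).1 = - (val y).1 -> (val x).2 = - (val y).2 -> False.
Proof.
case: x => [[p q] /= /andP[_ Hx]]; case: y => [[p' q'] /= /andP[_ Hy]] /= e1 e2.
subst p q.
case/orP: Hx => [Hx|/andP[/eqP Hx1 /eqP Hx2]];
case/orP: Hy => [Hy|/andP[/eqP Hy1 /eqP Hy2]]; simpl in *; lia.
Qed.

Lemma arc_eq (x y : iarc) : (val x).1 = (val y).1 -> (val x).2 = (val y).2 -> x = y.
Proof.
move=> e1 e2; apply: val_inj; move: e1 e2; case: (val x) => ? ?; case: (val y) => ? ? /= -> -> //.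
Qed.

(* Cramer *)
Lemma coefs (a b x : iarc) :
  disjoint_arcs a b -> disjoint_arcs x a -> disjoint_arcs x b ->
  exists al be, [/\ pm1 al, pm1 be & val x = lc al be (val a) (val b)].
Proof.
move=> /disjP hab /disjP hxa /disjP hxb.
exists (arc_det x b * arc_det a b), (- arc_det x a * arc_det a b).
split.
- by case: hab => ->; case: hxb => ->; rewrite /pm1; lia.
- by case: hab => ->; case: hxa => ->; rewrite /pm1; lia.
have DD : arc_det a b * arc_det a b = 1 by case: hab => ->; lia.
move: DD; rewrite /arc_det /lc; case: (val x) => x1 x2; case: (val a) => a1 a2;
  case: (val b) => b1 b2 /= DD.
congr pair.
- transitivity (x1 * ((a1 * b2 - a2 * b1) * (a1 * b2 - a2 * b1))); first by rewrite DD mulr1.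
  ring.
- transitivity (x2 * ((a1 * b2 - a2 * b1) * (a1 * b2 - a2 * b1))); first by rewrite DD mulr1.
  ring.
Qed.

Lemma lc_eq_cls (a b x y : iarc) al be ga de :
  disjoint_arcs a b -> pm1 al -> pm1 be -> pm1 ga -> pm1 de ->
  val x = lc al be (val a) (val b) -> val y = lc ga de (val a) (val b) ->
  (x = y) <-> (al * be = ga * de).
Proof.
move=> /disjP hab hal hbe hga hde ex ey; split.
- move=> exy; subst y; move: ex ey hab; rewrite /arc_det /lc.
  case: (val x) => x1 x2; case: (val a) => a1 a2; case: (val b) => b1 b2 /= [e1 e2] [f1 f2] hab.
  have k1 : (al - ga) * (a1 * b2 - a2 * b1) = 0.
    transitivity (b2 * ((al - ga) * a1 + (be - de) * b1) - b1 * ((al - ga) * a2 + (be - de) * b2)); first by ring.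
    have -> : (al - ga) * a1 + (be - de) * b1 = 0 by rewrite -[LHS]/(_) ; lia.
    have -> : (al - ga) * a2 + (be - de) * b2 = 0 by lia.
    by ring.
  have k2 : (be - de) * (a1 * b2 - a2 * b1) = 0.
    transitivity (a1 * ((al - ga) * a2 + (be - de) * b2) - a2 * ((al - ga) * a1 + (be - de) * b1)); first by ring.
    have -> : (al - ga) * a1 + (be - de) * b1 = 0 by lia.
    have -> : (al - ga) * a2 + (be - de) * b2 = 0 by lia.
    by ring.
  move: k1 k2; case: hab => ->; rewrite ?mulr1 ?mulrN1; case: hal => ->; case: hbe => ->;
    case: hga => ->; case: hde => ->; lia.
- move=> e.
  have [[ega ede]|[ega ede]] : (ga = al /\ de = be) \/ (ga = - al /\ de = - be).
    move: e; clear -hal hbe hga hde; move: hal hbe hga hde; rewrite /pm1; move=> [->|->] [->|->] [->|->] [->|->]; lia.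
  + by apply: val_inj; rewrite ex ey ega ede.
  + exfalso; apply: (@arc_not_neg x y); rewrite ex ey /lc /= ega ede; ring.
Qed.

Lemma QB_lc al be u v : pm1 al -> pm1 be ->
  Qf (lc al be u v) = Qf u + Qf v + al * be * Bt u v.
Proof.
rewrite /Qf /Bt /lc /=; case: u => u1 u2; case: v => v1 v2 /=.
by case=> ->; case=> ->; ring.
Qed.

Lemma Bt_odd (a b : iarc) : disjoint_arcs a b -> Bt (val a) (val b) != 0.
Proof.
move=> /disjP; rewrite /arc_det /Bt; case: (val a) => a1 a2; case: (val b) => b1 b2 /= h.
have -> : 2 * a1 * b1 + a1 * b2 + a2 * b1 + 2 * a2 * b2 =
  2 * (a1 * b1 + a2 * b2 + a2 * b1) + (a1 * b2 - a2 * b1) by ring.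
case: h => ->; lia.
Qed.

Lemma Qf_pos (a : iarc) : 0 < Qf (val a).
Proof.
case: a => [[p q] Ha]; rewrite /Qf /=; move: Ha => /andP[_ H]; simpl in H.
case/orP: H => [H|/andP[/eqP H1 /eqP H2]]; first nia.
by rewrite H1 H2.
Qed.

Lemma mk_arc (v : int * int) (a : iarc) :
  pm1 (v.1 * (val a).2 - v.2 * (val a).1) ->
  exists x : iarc, val x = v \/ val x = (- v.1, - v.2).
Proof.
case: v => p q /= hd.
have cop : gcdz p q = 1.
  apply/eqP; apply/coprimezP.
  case: hd => hd.
  - by exists ((val a).2, - (val a).1) => /=; rewrite -hd; ring.
  - by exists (- (val a).2, (val a).1) => /=; rewrite -[RHS]opprK -hd; ring.
have [qpos|qneg|q0] := ltrgtP 0 q.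
- have H : is_arc (p, q) by rewrite /is_arc /= cop eqxx qpos.
  by exists (exist _ (p, q) H); left.
- have H : is_arc (- p, - q).
    by rewrite /is_arc /= gcdNz gcdzN cop eqxx oppr_gt0 qneg.
  by exists (exist _ (- p, - q) H); right.
- subst q; move: cop; rewrite gcdz0 => cop.
  have [->|->] : p = 1 \/ p = -1 by move: cop; lia.
  + have H : is_arc (1, 0) by [].
    by exists (exist _ (1, 0) H); left.
  + have H : is_arc (1, 0) by [].
    by exists (exist _ (1, 0) H); right.
Qed.

Lemma pm1_flip x y z w : pm1 x -> pm1 y -> pm1 z -> pm1 w -> x * y <> z * w -> z * w = - (x * y).
Proof. by case=> ->; case=> ->; case=> ->; case=> ->; lia. Qed.

Lemma flip_exists (a b c : iarc) :
  disjoint_arcs a b -> disjoint_arcs c a -> disjoint_arcs c b ->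
  exists w : iarc, [/\ disjoint_arcs w a, disjoint_arcs w b & w != c].
Proof.
move=> hab hca hcb.
have [al [be [hal hbe ec]]] := coefs hab hca hcb.
have hD := disjP hab.
have [w hw] : exists w : iarc, val w = lc al (- be) (val a) (val b) \/
                               val w = (- (lc al (- be) (val a) (val b)).1, - (lc al (- be) (val a) (val b)).2).
  apply: (@mk_arc _ a); move: hD; rewrite /lc /arc_det /=.
  case: (val a) => a1 a2; case: (val b) => b1 b2 /=.
  have -> : (al * a1 + - be * b1) * a2 - (al * a2 + - be * b2) * a1 = be * (a1 * b2 - a2 * b1) by ring.
  by case=> ->; case: hbe => ->; rewrite /pm1; lia.
have hw' : val w = lc al (- be) (val a) (val b) \/ val w = lc (- al) be (val a) (val b).
  by case: hw => ->; [left|right]; rewrite /lc /=; congr pair; ring.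
have pmN : forall x, pm1 x -> pm1 (- x) by move=> x; case=> ->; rewrite /pm1; lia.
exists w; split.
- apply: pm1_disj; move: hD; rewrite /arc_det.
  case: hw' => ->; rewrite /lc; case: (val a) => a1 a2; case: (val b) => b1 b2 /=.
  + have -> : (al * a1 + - be * b1) * a2 - (al * a2 + - be * b2) * a1 = be * (a1 * b2 - a2 * b1) by ring.
    by case=> ->; case: hbe => ->; rewrite /pm1; lia.
  + have -> : (- al * a1 + be * b1) * a2 - (- al * a2 + be * b2) * a1 = - be * (a1 * b2 - a2 * b1) by ring.
    by case=> ->; case: hbe => ->; rewrite /pm1; lia.
- apply: pm1_disj; move: hD; rewrite /arc_det.
  case: hw' => ->; rewrite /lc; case: (val a) => a1 a2; case: (val b) => b1 b2 /=.
  + have -> : (al * a1 + - be * b1) * b2 - (al * a2 + - be * b2) * b1 = al * (a1 * b2 - a2 * b1) by ring.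
    by case=> ->; case: hal => ->; rewrite /pm1; lia.
  + have -> : (- al * a1 + be * b1) * b2 - (- al * a2 + be * b2) * b1 = - al * (a1 * b2 - a2 * b1) by ring.
    by case=> ->; case: hal => ->; rewrite /pm1; lia.
- apply/eqP => ewc.
  case: hw' => hw'.
  + have := (lc_eq_cls hab (pmN _ hal) hbe hal hbe _ ec).
    move: (lc_eq_cls hab hal (pmN _ hbe) hal hbe hw' ec) => [/(_ ewc)].
    by case: hal => ->; case: hbe => ->; lia.
  + move: (lc_eq_cls hab (pmN _ hal) hbe hal hbe hw' ec) => [/(_ ewc)].
    by case: hal => ->; case: hbe => ->; lia.
Qed.

Lemma flip_uniq (a b c w w' : iarc) :
  disjoint_arcs a b -> disjoint_arcs c a -> disjoint_arcs c b ->
  disjoint_arcs w a -> disjoint_arcs w b -> w != c ->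
  disjoint_arcs w' a -> disjoint_arcs w' b -> w' != c -> w = w'.
Proof.
move=> hab hca hcb hwa hwb /eqP hwc hva hvb /eqP hvc.
have [al [be [hal hbe ec]]] := coefs hab hca hcb.
have [ga [de [hga hde ew]]] := coefs hab hwa hwb.
have [ga' [de' [hga' hde' ev]]] := coefs hab hva hvb.
have h1 : ~ (ga * de = al * be) by move=> e; apply: hwc; apply/(lc_eq_cls hab hga hde hal hbe ew ec).
have h2 : ~ (ga' * de' = al * be) by move=> e; apply: hvc; apply/(lc_eq_cls hab hga' hde' hal hbe ev ec).
apply/(lc_eq_cls hab hga hde hga' hde' ew ev).
move: h1 h2; clear -hal hbe hga hde hga' hde'.
by case: hal => ->; case: hbe => ->; case: hga => ->; case: hde => ->; case: hga' => ->; case: hde' => ->; lia.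
Qed.

Lemma dQ_ne (a b c w : iarc) :
  disjoint_arcs a b -> disjoint_arcs c a -> disjoint_arcs c b ->
  disjoint_arcs w a -> disjoint_arcs w b -> w != c ->
  Qf (val w) != Qf (val c).
Proof.
move=> hab hca hcb hwa hwb /eqP hwc.
have [al [be [hal hbe ec]]] := coefs hab hca hcb.
have [ga [de [hga hde ew]]] := coefs hab hwa hwb.
have h1 : ~ (al * be = ga * de) by move=> e; apply: hwc; apply/(lc_eq_cls hab hga hde hal hbe ew ec).
have e2 := pm1_flip hal hbe hga hde h1.
rewrite ec ew !QB_lc // e2.
have := Bt_odd hab; move: (Bt _ _) => B hB.
apply/negP => /eqP e; move: e hB.
by case: hal => ->; case: hbe => ->; lia.
Qed.

Lemma dQ_two (a b c wc wb : iarc) :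
  disjoint_arcs a b -> disjoint_arcs c a -> disjoint_arcs c b ->
  disjoint_arcs wc a -> disjoint_arcs wc b -> wc != c ->
  disjoint_arcs wb a -> disjoint_arcs wb c -> wb != b ->
  (Qf (val wc) - Qf (val c)) + (Qf (val wb) - Qf (val b)) = 4 * Qf (val a).
Proof.
move=> hab hca hcb hwa hwb /eqP hwc hva hvc /eqP hvb.
have hac : disjoint_arcs a c by rewrite disjC.
have hba : disjoint_arcs b a by rewrite disjC.
have hbc : disjoint_arcs b c by rewrite disjC.
have [al [be [hal hbe ec]]] := coefs hab hca hcb.
have [ga [de [hga hde ew]]] := coefs hab hwa hwb.
have h1 : ~ (al * be = ga * de) by move=> e; apply: hwc; apply/(lc_eq_cls hab hga hde hal hbe ew ec).
have e2 := pm1_flip hal hbe hga hde h1.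
have pmN : forall x, pm1 x -> pm1 (- x) by move=> x; case=> ->; rewrite /pm1; lia.
have pmM : forall x y, pm1 x -> pm1 y -> pm1 (x * y) by move=> x y; case=> ->; case=> ->; rewrite /pm1; lia.
have eb : val b = lc (- (al * be)) be (val a) (val c).
  rewrite ec /lc /=; move: hbe; case: (val a) => a1 a2; case: (val b) => b1 b2 /= hbe.
  by case: hbe => ->; congr pair; ring.
have [ga' [de' [hga' hde' ev]]] := coefs hac hva hvc.
have h2 : ~ (- (al * be) * be = ga' * de').
  by move=> e; apply: hvb; apply/(lc_eq_cls hac hga' hde' (pmN _ (pmM _ _ hal hbe)) hbe ev eb).
have e3 := pm1_flip (pmN _ (pmM _ _ hal hbe)) hbe hga' hde' h2.
rewrite ev ew !QB_lc // e2 e3.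
rewrite ec !QB_lc //.
rewrite /Qf /Bt /lc /=; move: (val a) (val b) => [a1 a2] [b1 b2] /=.
by case: hal => ->; case: hbe => ->; ring.
Qed.


Ltac neqs := repeat match goal with H : is_true (_ != _) |- _ => move/eqP: H => H end.
Definition myinE := (in_fsetU, in_fset1, in_fsetD1, in_fsetD, in_fsetI, in_fset0).
Ltac fs_solve := neqs; apply/fsetP => ?; rewrite !myinE;
  repeat match goal with |- context[?u == ?v] => case: (u =P v) => ? end;
  try done; try congruence.

Section FS.
Variable K : choiceType.
Implicit Types a b c d w x : K.

Lemma in_fset3 a b c x : (x \in [fset a; b; c]) = [|| x == a, x == b | x == c].
Proof. by rewrite !myinE orbA. Qed.
Lemma mem31 a b c : a \in [fset a; b; c]. Proof. by rewrite in_fset3 eqxx. Qed.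
Lemma mem32 a b c : b \in [fset a; b; c]. Proof. by rewrite in_fset3 eqxx orbT. Qed.
Lemma mem33 a b c : c \in [fset a; b; c]. Proof. by rewrite in_fset3 eqxx !orbT. Qed.
Lemma in3P x a b c : x \in [fset a; b; c] -> [\/ x = a, x = b | x = c].
Proof. by rewrite in_fset3 => /orP[/eqP|/orP[]/eqP]; [constructor 1|constructor 2|constructor 3]. Qed.
Lemma notin3 x a b c : x != a -> x != b -> x != c -> x \notin [fset a; b; c].
Proof. by move=> *; rewrite in_fset3 !negb_or; apply/and3P. Qed.
Lemma notin3P x a b c : x \notin [fset a; b; c] -> [/\ x != a, x != b & x != c].
Proof. by rewrite in_fset3 !negb_or => /and3P. Qed.
Lemma fset3C1 a b c : [fset a; b; c] = [fset b; a; c].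
Proof. fs_solve. Qed.
Lemma fset3C2 a b c : [fset a; b; c] = [fset a; c; b].
Proof. fs_solve. Qed.
Lemma fset3R a b c : [fset a; b; c] = [fset b; c; a].
Proof. fs_solve. Qed.
Lemma fset3E a b c : [fset a; b; c] = a |` (b |` [fset c]).
Proof. fs_solve. Qed.

Lemma card3 a b c : a != b -> a != c -> b != c -> #|` [fset a; b; c]| = 3%N.
Proof.
move=> hab hac hbc; rewrite fset3E !cardfsU1 cardfs1 !myinE.
by rewrite (negbTE hab) (negbTE hac) (negbTE hbc).
Qed.

Lemma fset_swap a b a' b' c w :
  [fset a'; b'; c] = [fset a; b; c] -> c != a -> c != b -> c != a' -> c != b' ->
  [fset a'; b'; w] = [fset a; b; w].
Proof.
move=> /fsetP E hca hcb hca' hcb'; apply/fsetP => x; have := E x; rewrite !myinE.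
case: (x =P c) => [->|_]; last by rewrite !orbF => ->.
by rewrite (negbTE hca) (negbTE hcb) (negbTE hca') (negbTE hcb').
Qed.
Lemma forall3 (r : rel K) a b c :
  (forall x y, r x y = r y x) -> r a b -> r c a -> r c b ->
  [forall x : [fset a; b; c], forall y : [fset a; b; c], (val x != val y) ==> r (val x) (val y)].
Proof.
move=> rC hab hca hcb.
have hba : r b a by rewrite rC.
have hac : r a c by rewrite rC.
have hbc : r b c by rewrite rC.
apply/forallP => x; apply/forallP => y; apply/implyP.
have := valP x; have := valP y; rewrite !in_fset3.
move: (val x) (val y) => u v.
case/orP => [/eqP ->|/orP[] /eqP ->]; case/orP => [/eqP ->|/orP[] /eqP ->] //; by rewrite eqxx.
Qed.
Lemma recon (s t : {fset K}) a b z w :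
  t = [fset a; b; z] -> t `\` s = [fset z] -> s `\` t = [fset w] ->
  a != z -> b != z -> s = [fset a; b; w].
Proof.
move=> et /fsetP e1 /fsetP e2 haz hbz; subst t; apply/fsetP => x.
have := e1 x; have := e2 x; rewrite !myinE; neqs.
case: (x \in s); repeat match goal with |- context[?u == ?v] => case: (u =P v) => ? end;
  intros; simpl in *; try done; try congruence.
Qed.

Lemma fsetI3 a b c w : w != c -> w != a -> w != b -> c != a -> c != b ->
  [fset a; b; w] `&` [fset a; b; c] = [fset a; b].
Proof. move=> *; fs_solve. Qed.

Lemma sum3 (R : comPzRingType) (F : K -> R) a b c : a != b -> a != c -> b != c ->
  \sum_(x <- [fset a; b; c]) F x = F a + F b + F c.
Proof.
move=> hab hac hbc.
have ha : a \notin b |` [fset c] by rewrite !myinE negb_or hab hac.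
have hb : b \notin [fset c] by rewrite !myinE hbc.
by rewrite fset3E big_fsetU1 // big_fsetU1 // big_seq_fset1 /= addrA.
Qed.

Lemma sum2 (R : comPzRingType) (F : K -> R) a b : a != b ->
  \sum_(x <- [fset a; b]) F x = F a + F b.
Proof.
move=> hab; have ha : a \notin [fset b] by rewrite !myinE hab.
by rewrite big_fsetU1 // big_seq_fset1.
Qed.

Lemma prod2 (R : comPzRingType) (F : K -> R) a b : a != b ->
  \prod_(x <- [fset a; b]) F x = F a * F b.
Proof.
move=> hab; have ha : a \notin [fset b] by rewrite !myinE hab.
by rewrite big_fsetU1 // big_seq_fset1.
Qed.
Lemma card3_shape (t : {fset K}) : #|` t| = 3%N -> exists a b c,
  [/\ t = [fset a; b; c], a != b, a != c & b != c].
Proof.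
move=> c3.
have [t0|[a ha]] := fset_0Vmem t; first by move: c3; rewrite t0 cardfs0.
have c2 : #|` t `\ a| = 2%N by move: c3; rewrite (cardfsD1 a) ha add1n => -[].
have [t0|[b hb]] := fset_0Vmem (t `\ a); first by move: c2; rewrite t0 cardfs0.
have c1 : #|` (t `\ a) `\ b| = 1%N by move: c2; rewrite (cardfsD1 b) hb add1n => -[].
move/eqP/cardfs1P: c1 => [c hc].
have hc' : c \in (t `\ a) `\ b by rewrite hc myinE.
have et : t = [fset a; b; c].
  by rewrite -(fsetD1K ha) -(fsetD1K hb) hc fset3E.
move: hb hc'; rewrite !myinE => /andP[hba hbt] /andP[hcb /andP[hca hct]].
by exists a, b, c; split => //; rewrite eq_sym.
Qed.

Lemma card_diff (s t : {fset K}) : #|` s| = 3%N -> #|` t| = 3%N -> #|` s `&` t| = 2%N ->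
  exists z w, t `\` s = [fset z] /\ s `\` t = [fset w].
Proof.
move=> cs ct c2.
have c1 : #|` t `\` s| == 1%N by rewrite cardfsD fsetIC c2 ct.
have c1' : #|` s `\` t| == 1%N by rewrite cardfsD c2 cs.
move/cardfs1P: c1 => [z ez]; move/cardfs1P: c1' => [w ew].
by exists z, w.
Qed.
End FS.

Lemma tri_disj (t : tri) x y : is_tri t -> x \in t -> y \in t -> x != y -> disjoint_arcs x y.
Proof.
case/andP=> _ /forallP H hx hy hxy.
by move: (H [` hx]) => /forallP /(_ [` hy]) /implyP /=; apply.
Qed.

Lemma is_tri3 (a b c : iarc) :
  disjoint_arcs a b -> disjoint_arcs c a -> disjoint_arcs c b -> is_tri [fset a; b; c].
Proof.
move=> hab hca hcb.
have hba : disjoint_arcs b a by rewrite disjC.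
have hac : disjoint_arcs a c by rewrite disjC.
have hbc : disjoint_arcs b c by rewrite disjC.
apply/andP; split.
  by rewrite card3 // ?disj_neq // eq_sym disj_neq.
exact: forall3 disjC hab hca hcb.
Qed.

Lemma tri_shape (t : tri) : is_tri t -> exists a b c,
  [/\ t = [fset a; b; c], disjoint_arcs a b, disjoint_arcs c a & disjoint_arcs c b].
Proof.
move=> ht; have /andP[/eqP c3 _] := ht.
have [a [b [c [et hab hac hbc]]]] := card3_shape c3.
have [ha hb hc] : [/\ a \in t, b \in t & c \in t] by rewrite et !in_fset3 !eqxx ?orbT.
exists a, b, c; split => //.
- exact: tri_disj ht ha hb hab.
- by apply: tri_disj ht hc ha _; rewrite eq_sym.
- by apply: tri_disj ht hc hb _; rewrite eq_sym.
Qed.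

Lemma tri_at (t : tri) z : is_tri t -> z \in t -> exists a b,
  [/\ t = [fset a; b; z], disjoint_arcs a b, disjoint_arcs z a & disjoint_arcs z b].
Proof.
move=> ht hz; have [a [b [c [et hab hca hcb]]]] := tri_shape ht.
have : z \in [fset a; b; c] by rewrite -et.
rewrite in_fset3 => /orP[/eqP ->|/orP[] /eqP ->].
- exists b, c; split; [rewrite et; exact: fset3R| by rewrite disjC | done | by rewrite disjC].
- exists a, c; split; [rewrite et; exact: fset3C2| by rewrite disjC | by rewrite disjC | by rewrite disjC].
- by exists a, b.
Qed.

Lemma nbr_shape (s t : tri) : flip_adj s t -> exists a b c w,
  [/\ t = [fset a; b; c], s = [fset a; b; w], [/\ disjoint_arcs a b, disjoint_arcs c a & disjoint_arcs c b],
      [/\ disjoint_arcs w a & disjoint_arcs w b] & w != c].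
Proof.
case/and3P => hs ht /eqP c2.
have /andP[/eqP cs _] := hs; have /andP[/eqP ct _] := ht.
have [z [w [ez ew]]] := card_diff cs ct c2.
have hz : z \in t `\` s by rewrite ez myinE.
have hw : w \in s `\` t by rewrite ew myinE.
move: (hz) (hw); rewrite !myinE => /andP[zs zt] /andP[wt ws].
have [a [b [et hab hza hzb]]] := tri_at ht zt.
have haz : a != z by rewrite eq_sym disj_neq.
have hbz : b != z by rewrite eq_sym disj_neq.
have es := recon et ez ew haz hbz.
have wa : w != a by apply: contraNneq wt => ->; rewrite et; exact: mem31.
have wb : w != b by apply: contraNneq wt => ->; rewrite et; exact: mem32.
have wz : w != z by apply: contraNneq wt => ->.
have [ws' as' bs'] : [/\ w \in s, a \in s & b \in s] by rewrite es; split; [exact: mem33|exact: mem31|exact: mem32].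
exists a, b, z, w; split => //; split; exact: (tri_disj hs).
Qed.

Lemma flip_adjC (s t : tri) : flip_adj s t = flip_adj t s.
Proof. by rewrite /flip_adj fsetIC; case: (is_tri s); case: (is_tri t). Qed.

Lemma flip_adj_neq (s t : tri) : flip_adj s t -> s != t.
Proof.
case/and3P => hs _ c2; apply/eqP => est; subst; move: hs c2; rewrite fsetIid.
by case/andP => /eqP ->.
Qed.

Lemma flip_adj_of (a b c w : iarc) :
  disjoint_arcs a b -> disjoint_arcs c a -> disjoint_arcs c b ->
  disjoint_arcs w a -> disjoint_arcs w b -> w != c ->
  flip_adj [fset a; b; w] [fset a; b; c].
Proof.
move=> hab hca hcb hwa hwb hwc.
apply/and3P; split; try exact: is_tri3.
have hac : disjoint_arcs a c by rewrite disjC.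
have hbc : disjoint_arcs b c by rewrite disjC.
have HI : [fset a; b; w] `&` [fset a; b; c] = [fset a; b].
  by apply: fsetI3; rewrite // disj_neq.
by rewrite HI cardfs2 disj_neq.
Qed.

Lemma nbr_all (a b c wa wb wc : iarc) :
  disjoint_arcs a b -> disjoint_arcs c a -> disjoint_arcs c b ->
  disjoint_arcs wc a -> disjoint_arcs wc b -> wc != c ->
  disjoint_arcs wb a -> disjoint_arcs wb c -> wb != b ->
  disjoint_arcs wa b -> disjoint_arcs wa c -> wa != a ->
  forall s, flip_adj s [fset a; b; c] ->
  [\/ s = [fset a; b; wc], s = [fset a; c; wb] | s = [fset b; c; wa]].
Proof.
move=> hab hca hcb hwca hwcb hwcc hwba hwbc hwbb hwab hwac hwaa s hs.
have [a' [b' [c' [w [et es [hab' hca' hcb'] [hwa' hwb'] hwc']]]]] := nbr_shape hs.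
have hc' : c' \in [fset a; b; c] by rewrite et; exact: mem33.
have hwt : w \notin [fset a; b; c].
  rewrite et; apply: notin3; [exact: disj_neq|exact: disj_neq|exact: hwc'].
have hst : is_tri s by case/and3P: hs.
have hac : disjoint_arcs a c by rewrite disjC.
have hbc : disjoint_arcs b c by rewrite disjC.
have hba : disjoint_arcs b a by rewrite disjC.
have [hwa0 hwb0 hwc0] := notin3P hwt.
have na' : c' != a' by rewrite disj_neq.
have nb' : c' != b' by rewrite disj_neq.
case: (in3P hc') => ec'; subst c'.
-
  have E : [fset a'; b'; a] = [fset b; c; a] := etrans (esym et) (fset3R a b c).
  have es' : s = [fset b; c; w].
    apply: (etrans es); apply: (fset_swap _ E); [exact: disj_neq hab|exact: disj_neq hac|exact: na'|exact: nb'].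
  have ws : w \in s by rewrite es'; exact: mem33.
  have hwb : disjoint_arcs w b by apply: (tri_disj hst ws); try assumption; rewrite es'; exact: mem31.
  have hwc : disjoint_arcs w c by apply: (tri_disj hst ws); try assumption; rewrite es'; exact: mem32.
  constructor 3; rewrite es' (flip_uniq hbc hab hac hwb hwc hwa0 hwab hwac hwaa); exact: erefl.
-
  have E : [fset a'; b'; b] = [fset a; c; b] := etrans (esym et) (fset3C2 a b c).
  have es' : s = [fset a; c; w].
    apply: (etrans es); apply: (fset_swap _ E); [exact: disj_neq hba|exact: disj_neq hbc|exact: na'|exact: nb'].
  have ws : w \in s by rewrite es'; exact: mem33.
  have hwa : disjoint_arcs w a by apply: (tri_disj hst ws); try assumption; rewrite es'; exact: mem31.
  have hwc : disjoint_arcs w c by apply: (tri_disj hst ws); try assumption; rewrite es'; exact: mem32.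
  constructor 2; rewrite es' (flip_uniq hac hba hbc hwa hwc hwb0 hwba hwbc hwbb); exact: erefl.
-
  have es' : s = [fset a; b; w].
    apply: (etrans es); apply: (fset_swap _ (esym et)); [exact: disj_neq hca|exact: disj_neq hcb|exact: na'|exact: nb'].
  have ws : w \in s by rewrite es'; exact: mem33.
  have hwa : disjoint_arcs w a by apply: (tri_disj hst ws); try assumption; rewrite es'; exact: mem31.
  have hwb : disjoint_arcs w b by apply: (tri_disj hst ws); try assumption; rewrite es'; exact: mem32.
  constructor 1; rewrite es' (flip_uniq hab hca hcb hwa hwb hwc' hwca hwcb hwcc); exact: erefl.
Qed.


Definition hgt (t : tri) : int := \sum_(x <- t) Qf (val x).

Lemma hgt3 (a b c : iarc) : a != b -> a != c -> b != c ->
  hgt [fset a; b; c] = Qf (val a) + Qf (val b) + Qf (val c).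
Proof. move=> hab hac hbc; exact: (sum3 (fun x : iarc => Qf (val x)) hab hac hbc). Qed.

Lemma hgt_ne (s t : tri) : flip_adj s t -> hgt s != hgt t.
Proof.
move=> hs; have [a [b [c [w [et es [hab hca hcb] [hwa hwb] hwc]]]]] := nbr_shape hs.
have hac : disjoint_arcs a c by rewrite disjC.
have hbc : disjoint_arcs b c by rewrite disjC.
have E1 : hgt t = Qf (val a) + Qf (val b) + Qf (val c).
  rewrite et; apply: hgt3; [exact: disj_neq hab|exact: disj_neq hac|exact: disj_neq hbc].
have E2 : hgt s = Qf (val a) + Qf (val b) + Qf (val w).
  rewrite es; apply: hgt3; [exact: disj_neq hab|rewrite eq_sym; exact: disj_neq hwa|rewrite eq_sym; exact: disj_neq hwb].
rewrite E1 E2; have := dQ_ne hab hca hcb hwa hwb hwc.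
by apply: contra => /eqP /addrI ->.
Qed.

Lemma down_uniq (s1 s2 t : tri) : flip_adj s1 t -> flip_adj s2 t ->
  hgt s1 < hgt t -> hgt s2 < hgt t -> s1 = s2.
Proof.
move=> h1 h2 l1 l2.
have ht : is_tri t by case/and3P: h1.
have [a [b [c [et hab hca hcb]]]] := tri_shape ht.
have hac : disjoint_arcs a c by rewrite disjC.
have hbc : disjoint_arcs b c by rewrite disjC.
have hba : disjoint_arcs b a by rewrite disjC.
have [wc [hwca hwcb hwcc]] := flip_exists hab hca hcb.
have [wb [hwba hwbc hwbb]] := flip_exists hac hba hbc.
have [wa [hwab hwac hwaa]] := flip_exists hbc hab hac.
have dcb := dQ_two hab hca hcb hwca hwcb hwcc hwba hwbc hwbb.
have dca := dQ_two hba hcb hca hwcb hwca hwcc hwab hwac hwaa.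
have dba := dQ_two hca hbc hba hwbc hwba hwbb hwac hwab hwaa.
have pa := Qf_pos a; have pb := Qf_pos b; have pc := Qf_pos c.
have Et : hgt t = Qf (val a) + Qf (val b) + Qf (val c).
  rewrite et; apply: hgt3; [exact: disj_neq hab|exact: disj_neq hac|exact: disj_neq hbc].
have Ec : hgt [fset a; b; wc] = Qf (val a) + Qf (val b) + Qf (val wc).
  apply: hgt3; [exact: disj_neq hab|rewrite eq_sym; exact: disj_neq hwca|rewrite eq_sym; exact: disj_neq hwcb].
have Eb : hgt [fset a; c; wb] = Qf (val a) + Qf (val c) + Qf (val wb).
  apply: hgt3; [exact: disj_neq hac|rewrite eq_sym; exact: disj_neq hwba|rewrite eq_sym; exact: disj_neq hwbc].
have Ea : hgt [fset b; c; wa] = Qf (val b) + Qf (val c) + Qf (val wa).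
  apply: hgt3; [exact: disj_neq hbc|rewrite eq_sym; exact: disj_neq hwab|rewrite eq_sym; exact: disj_neq hwac].
have all := nbr_all hab hca hcb hwca hwcb hwcc hwba hwbc hwbb hwab hwac hwaa.
rewrite et in h1 h2.
have V : forall s, flip_adj s [fset a; b; c] ->
  [\/ s = [fset a; b; wc] /\ hgt s = Qf (val a) + Qf (val b) + Qf (val wc),
      s = [fset a; c; wb] /\ hgt s = Qf (val a) + Qf (val c) + Qf (val wb) |
      s = [fset b; c; wa] /\ hgt s = Qf (val b) + Qf (val c) + Qf (val wa)].
  move=> s hs; case: (all _ hs) => e.
  - by constructor 1; split => //; rewrite e; exact: Ec.
  - by constructor 2; split => //; rewrite e; exact: Eb.
  - by constructor 3; split => //; rewrite e; exact: Ea.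
move: l1 l2; rewrite Et.
set qa := Qf (val a) in Et dcb dca dba pa V *; set qb := Qf (val b) in Et dcb dca dba pb V *.
set qc := Qf (val c) in Et dcb dca dba pc V *; set qwa := Qf (val wa) in dca dba V *.
set qwb := Qf (val wb) in dcb dba V *; set qwc := Qf (val wc) in dcb dca V *.
case: (V _ h1) => [[e1 v1]|[e1 v1]|[e1 v1]]; case: (V _ h2) => [[e2 v2]|[e2 v2]|[e2 v2]];
  rewrite v1 v2 => l1 l2; first [by exfalso; clear -l1 l2 dcb dca dba pa pb pc; lia | exact: (etrans e1 (esym e2))].
Qed.




Section Alg.
Variable E : comUnitRingType.

Lemma vertex_id (la lb lc Wa Wb Wc h : E) :
  la \is a GRing.unit -> lb \is a GRing.unit -> lc \is a GRing.unit ->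
  (2 : E) \is a GRing.unit -> h \is a GRing.unit ->
  h = la / (lb * lc) + lb / (la * lc) + lc / (la * lb) + Wa / la + Wb / lb + Wc / lc ->
  h^-1 * (lc / (la * lb) + (Wa / (2 * la) + Wb / (2 * lb))) +
  h^-1 * (lb / (la * lc) + (Wa / (2 * la) + Wc / (2 * lc))) +
  h^-1 * (la / (lb * lc) + (Wb / (2 * lb) + Wc / (2 * lc))) = 1.
Proof.
move=> ua ub uc u2 uh eh.
rewrite -!mulrDr -[RHS](mulVr uh); congr (_ * _).
rewrite eh !invrM //.
have e2 : 2 * (2 : E)^-1 = 1 by rewrite mulrV.
transitivity (la * (lc^-1 * lb^-1) + lb * (lc^-1 * la^-1) + lc * (lb^-1 * la^-1)
   + (Wa * la^-1 + Wb * lb^-1 + Wc * lc^-1) * (2 * 2^-1)); first by ring.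
by rewrite e2 mulr1; ring.
Qed.

Lemma edge_id (la lb lc lw Wa Wb Wc h : E) :
  la \is a GRing.unit -> lb \is a GRing.unit -> lc \is a GRing.unit ->
  (2 : E) \is a GRing.unit -> h \is a GRing.unit ->
  h = la / (lb * lc) + lb / (la * lc) + lc / (la * lb) + Wa / la + Wb / lb + Wc / lc ->
  lc * lw = la ^+ 2 + lb ^+ 2 + la * lb * Wc ->
  h^-1 * (lc / (la * lb) + (Wa / (2 * la) + Wb / (2 * lb))) +
  h^-1 * (lw / (la * lb) + (Wa / (2 * la) + Wb / (2 * lb))) = 1.
Proof.
move=> ua ub uc u2 uh eh ew.
rewrite -!mulrDr -[RHS](mulVr uh); congr (_ * _).
rewrite eh !invrM //.
have e2 : 2 * (2 : E)^-1 = 1 by rewrite mulrV.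
have ea : la * la^-1 = 1 by rewrite mulrV.
have eb : lb * lb^-1 = 1 by rewrite mulrV.
have ec : lc * lc^-1 = 1 by rewrite mulrV.
have hw : lw * (lb^-1 * la^-1) = la * (lc^-1 * lb^-1) + lb * (lc^-1 * la^-1) + Wc * lc^-1.
  transitivity ((lc * lw) * (lb^-1 * la^-1) * lc^-1).
    by rewrite -[LHS]mulr1 -ec; ring.
  rewrite ew.
  transitivity (la * (lc^-1 * lb^-1) * (la * la^-1) + lb * (lc^-1 * la^-1) * (lb * lb^-1)
     + Wc * lc^-1 * (la * la^-1) * (lb * lb^-1)); first by ring.
  by rewrite ea eb !mulr1.
transitivity (lc * (lb^-1 * la^-1) + lw * (lb^-1 * la^-1)
   + (Wa * la^-1 + Wb * lb^-1) * (2 * 2^-1)); first by ring.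
by rewrite e2 mulr1 hw; ring.
Qed.
End Alg.


Section FS2.
Variable K : choiceType.
Implicit Types a b c d w x : K.

Lemma fsetD3 a b c w : w != c -> c != a -> c != b ->
  [fset a; b; c] `\` [fset a; b; w] = [fset c].
Proof. move=> *; fs_solve. Qed.

Lemma exists_max (f : K -> int) (T : {fset K}) : T != fset0 ->
  exists2 x, x \in T & forall y, y \in T -> f y <= f x.
Proof.
move=> hT.
suff : forall s : seq K, s != [::] -> exists2 x, x \in s & forall y, y \in s -> f y <= f x.
  move/(_ (enum_fset T)); case; first by apply: contraNneq hT => e; apply/eqP/fsetP => z; rewrite in_fset0 -[z \in T]/(z \in enum_fset T) e.
  by move=> x hx hy; exists x.
elim => // z [|z' s] IH _.
  by exists z => [|y]; rewrite ?inE // => /eqP ->.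
case: IH => // x hx hm.
have [le|lt] := leP (f z) (f x).
- exists x; first by rewrite inE hx orbT.
  by move=> y; rewrite inE => /orP[/eqP ->|/hm].
- exists z; first by rewrite inE eqxx.
  move=> y; rewrite inE => /orP[/eqP ->//|/hm hy]; exact: le_trans hy (ltW lt).
Qed.

Lemma exists_min (f : K -> int) (T : {fset K}) : T != fset0 ->
  exists2 x, x \in T & forall y, y \in T -> f x <= f y.
Proof.
move=> hT; have [x hx hm] := exists_max (fun z => - f z) hT.
by exists x => // y /hm; rewrite lerN2.
Qed.
End FS2.

Definition down (x y : tri) := flip_adj x y && (hgt y < hgt x).

Definition uroot (T : {fset tri}) :=
  forall x y, x \in T -> y \in T ->
    (forall z, z \in T -> ~~ down x z) -> (forall z, z \in T -> ~~ down y z) -> x = y.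

Lemma down_up (x y : tri) : flip_adj x y -> ~~ down x y -> down y x.
Proof.
move=> hxy; rewrite /down hxy /= -leNgt le_eqVlt => /orP[/eqP e|lt].
  by move: (hgt_ne hxy); rewrite e eqxx.
by rewrite flip_adjC hxy.
Qed.

Lemma memT (x : iarc) (A B : tri) : A = B -> x \in A -> x \in B.
Proof. by move=> ->. Qed.

Lemma transp (P : tri -> Prop) (x y : tri) : x = y -> P x -> P y.
Proof. by move=> ->. Qed.

Section Main.
Variable (K : realFieldType) (E : comUnitRingType) (body : {rmorphism E -> K}).
Hypothesis hunit : forall x : E, (x \is a GRing.unit) = (body x != 0).
Variables (lam W : iarc -> E).
Hypothesis lam_pos : forall e, 0 < body (lam e).
Hypothesis W_body : forall e, body (W e) = 0.
Hypothesis flip_rel : forall a b c d : iarc,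
     flip_adj [fset a; b; c] [fset a; b; d] -> c != d ->
     lam c * lam d = lam a ^+ 2 + lam b ^+ 2 + lam a * lam b * W c.
Variable h : E.
Hypothesis h_def : forall a b c : iarc, is_tri [fset a; b; c] ->
     h = semi_perimeter lam W a b c.

Notation ps := (psi lam W h).

Lemma lam_unit x : lam x \is a GRing.unit.
Proof. by rewrite hunit; apply: lt0r_neq0. Qed.

Lemma two_unit : (2 : E) \is a GRing.unit.
Proof. by rewrite hunit rmorph_nat pnatr_eq0. Qed.

Lemma h_unit (a b c : iarc) : is_tri [fset a; b; c] -> h \is a GRing.unit.
Proof.
move=> ht; rewrite hunit (h_def ht) /semi_perimeter.
have bi : forall x, body (lam x)^-1 = (body (lam x))^-1 by move=> x; rewrite rmorphV // lam_unit.
rewrite !rmorphD !rmorphM !invrM ?lam_unit // !rmorphM !bi !W_body !mul0r !addr0.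
apply: lt0r_neq0.
have pa := lam_pos a; have pb := lam_pos b; have pc := lam_pos c.
by rewrite !addr_gt0 // !mulr_gt0 // invr_gt0.
Qed.

Lemma psi_flip (s t : tri) (a b c w : iarc) :
  t = [fset a; b; c] -> s = [fset a; b; w] ->
  a != b -> c != a -> c != b -> w != a -> w != b -> w != c ->
  ps (s, t) = h^-1 * (lam c / (lam a * lam b) + (W a / (2 * lam a) + W b / (2 * lam b))).
Proof.
move=> et es hab hca hcb hwa hwb hwc.
have D : t `\` s = [fset c] by rewrite et es; apply: fsetD3.
have I : s `&` t = [fset a; b] by rewrite et es; apply: fsetI3; rewrite // eq_sym.
rewrite /psi /= D I big_seq_fset1 (prod2 lam hab).
by rewrite (sum2 (fun x => W x / (2 * lam x)) hab).
Qed.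

Lemma star (t p : tri) : flip_adj p t -> exists sb sa : tri,
  [/\ flip_adj sb t, flip_adj sa t,
      (forall s, flip_adj s t -> [\/ s = p, s = sb | s = sa]),
      [/\ p != sb, p != sa & sb != sa] &
      ps (p, t) + ps (sb, t) + ps (sa, t) = 1 /\ ps (t, p) + ps (p, t) = 1].
Proof.
move=> hp.
have [a [b [c [w [et ep [hab hca hcb] [hwa hwb] hwc]]]]] := nbr_shape hp.
have hac : disjoint_arcs a c by rewrite disjC.
have hbc : disjoint_arcs b c by rewrite disjC.
have hba : disjoint_arcs b a by rewrite disjC.
have [wb [hwba hwbc hwbb]] := flip_exists hac hba hbc.
have [wa [hwab hwac hwaa]] := flip_exists hbc hab hac.
have nab := disj_neq hab; have nca := disj_neq hca; have ncb := disj_neq hcb.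
have nac := disj_neq hac; have nbc := disj_neq hbc; have nba := disj_neq hba.
have nwa := disj_neq hwa; have nwb := disj_neq hwb.
have nwba := disj_neq hwba; have nwbc := disj_neq hwbc.
have nwab := disj_neq hwab; have nwac := disj_neq hwac.
have nwc : w != c := hwc.
have ncw : c != w by rewrite eq_sym.
have nwbb : wb != b := hwbb.
have nwaa : wa != a := hwaa.
have ht : is_tri [fset a; b; c] by exact: is_tri3.
have [sb Esb] : exists sb : tri, [fset a; c; wb] = sb := ex_intro _ _ erefl.
have [sa Esa] : exists sa : tri, [fset b; c; wa] = sa := ex_intro _ _ erefl.
have hsb : flip_adj sb t.
  rewrite -Esb; apply: (@transp (fun X => flip_adj [fset a; c; wb] X) _ _ (esym (etrans et (fset3C2 a b c)))); exact: flip_adj_of.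
have hsa : flip_adj sa t.
  rewrite -Esa; apply: (@transp (fun X => flip_adj [fset b; c; wa] X) _ _ (esym (etrans et (fset3R a b c)))); exact: flip_adj_of.
exists sb, sa; split => //.
- move=> s hs; rewrite et in hs.
  case: (nbr_all hab hca hcb hwa hwb hwc hwba hwbc hwbb hwab hwac hwaa hs) => e.
  + by constructor 1; rewrite ep.
  + by constructor 2; rewrite e.
  + by constructor 3; rewrite e.
- split.
  + apply/negP => /eqP e.
    have := memT (etrans Esb (etrans (esym e) ep)) (mem32 a c wb); apply/negP; exact: notin3.
  + apply/negP => /eqP e.
    have := memT (etrans Esa (etrans (esym e) ep)) (mem32 b c wa); apply/negP; exact: notin3.
  + apply/negP => /eqP e.
    have := memT (etrans Esa (etrans (esym e) (esym Esb))) (mem31 b c wa); apply/negP; apply: notin3 => //.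
    by rewrite eq_sym.
have ua := lam_unit a; have ub := lam_unit b; have uc := lam_unit c.
have uh := h_unit ht.
have eh : h = lam a / (lam b * lam c) + lam b / (lam a * lam c) + lam c / (lam a * lam b)
   + W a / lam a + W b / lam b + W c / lam c by rewrite (h_def ht).
split.
- rewrite (psi_flip et ep nab nca ncb nwa nwb nwc).
  rewrite (psi_flip (etrans et (fset3C2 a b c)) (esym Esb) nac nba nbc nwba nwbc nwbb).
  rewrite (psi_flip (etrans et (fset3R a b c)) (esym Esa) nbc nab nac nwab nwac nwaa).
  exact: vertex_id ua ub uc two_unit uh eh.
- rewrite (psi_flip ep et nab nwa nwb nca ncb ncw) (psi_flip et ep nab nca ncb nwa nwb nwc).
  have ew : lam c * lam w = lam a ^+ 2 + lam b ^+ 2 + lam a * lam b * W c.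
    apply: flip_rel => //; exact: flip_adj_of.
  rewrite addrC; exact: edge_id ua ub uc two_unit uh eh ew.
Qed.

Lemma main_ind n : forall T : {fset tri}, #|` T| = n.+1 -> (forall t, t \in T -> is_tri t) -> uroot T ->
  exists C : {fset tri * tri}, (forall e, (e \in C) = in_boundary T e) /\ \sum_(e <- C) ps e = 1.
Proof.
elim: n => [|n IH] T cT triT ur.
- have /cardfs1P [t eT] : #|` T| == 1%N by rewrite cT.
  have tT : t \in T by rewrite eT in_fset1 eqxx.
  have ht := triT t tT.
  have [a [b [c [et hab hca hcb]]]] := tri_shape ht.
  have [w [hwa hwb hwc]] := flip_exists hab hca hcb.
  have [p Ep] : exists p : tri, [fset a; b; w] = p := ex_intro _ _ erefl.
  have hp : flip_adj p t by rewrite -Ep et; exact: flip_adj_of.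
  have [sb [sa [hsb hsa all [d1 d2 d3] [vsum _]]]] := star hp.
  exists [fset (p, t); (sb, t); (sa, t)]; split.
  + move=> [x y]; rewrite /in_boundary /= eT !in_fset1 in_fset3 !xpair_eqE.
    apply/idP/idP.
    * case/orP => [/andP[/eqP -> /eqP ->]|/orP[] /andP[/eqP -> /eqP ->]]; rewrite eqxx /=.
      - by rewrite hp (flip_adj_neq hp).
      - by rewrite hsb (flip_adj_neq hsb).
      - by rewrite hsa (flip_adj_neq hsa).
    * case/and3P => hxy /eqP eyt _; subst y.
      by case: (all x hxy) => ->; rewrite !eqxx ?orbT.
  + have n1 : (p, t) != (sb, t) by rewrite xpair_eqE negb_and d1.
    have n2 : (p, t) != (sa, t) by rewrite xpair_eqE negb_and d2.
    have n3 : (sb, t) != (sa, t) by rewrite xpair_eqE negb_and d3.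
    by rewrite (sum3 ps n1 n2 n3).
- have T0 : T != fset0 by rewrite -cardfs_gt0 cT.
  have [M hM maxM] := exists_max hgt T0.
  have [p pT dMp] : exists2 p, p \in T & down M p.
    case: (boolP (has (down M) (enum_fset T))) => [/hasP [p pT dMp]|/hasPn nd]; first by exists p.
    exfalso.
    have [m hm minm] := exists_min hgt T0.
    have ndm : forall z, z \in T -> ~~ down m z.
      move=> z zT; apply/negP => /andP[_ lt]; move: (minm z zT); by rewrite leNgt lt.
    have emM : m = M by apply: ur => //; move=> z zT; exact: nd.
    have c1 : #|` T `\ M| = n.+1 by move: cT; rewrite (cardfsD1 M) hM add1n => -[].
    have [e0|[x hx]] := fset_0Vmem (T `\ M); first by move: c1; rewrite e0 cardfs0.
    move: hx; rewrite in_fsetD1 => /andP[xM xT].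
    have ndx : forall z, z \in T -> ~~ down x z.
      move=> z zT; apply/negP => /andP[_ lt].
      have := maxM x xT; have := minm z zT; rewrite emM => l1 l2.
      by move: (le_lt_trans (le_trans l2 l1) lt); rewrite ltxx.
    by move: xM; rewrite (ur x M xT hM ndx nd) eqxx.
  set T' := T `\ M.
  have cT' : #|` T'| = n.+1 by move: cT; rewrite (cardfsD1 M) hM add1n => -[].
  have inT' : forall z, (z \in T') = (z != M) && (z \in T) by move=> z; rewrite in_fsetD1.
  have triT' : forall t, t \in T' -> is_tri t by move=> t; rewrite inT' => /andP[_ /triT].
  have ur' : uroot T'.
    move=> x y; rewrite !inT' => /andP[_ xT] /andP[_ yT] nx ny.
    have lift : forall u, u \in T -> (forall z, z \in T' -> ~~ down u z) -> forall z, z \in T -> ~~ down u z.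
      move=> u uT nu z zT; apply/negP => duz; have := nu z; rewrite inT' zT andbT.
      case: (z =P M) => [ezM|_]; last by move=> /(_ isT); rewrite duz.
      move: duz => /andP[_]; rewrite ezM => lt _; have := maxM u uT.
      by rewrite leNgt lt.
    exact: ur x y xT yT (lift x xT nx) (lift y yT ny).
  have [C' [specC' sumC']] := IH T' cT' triT' ur'.
  have hpM : flip_adj p M by rewrite flip_adjC; case/andP: dMp.
  have pM : hgt p < hgt M by case/andP: dMp.
  have [sb [sa [hsb hsa all [d1 d2 d3] [vsum esum]]]] := star hpM.
  have lowT : forall s, flip_adj s M -> s \in T -> hgt s < hgt M.
    move=> s hs sT; rewrite lt_neqAle maxM // andbT; exact: hgt_ne.
  have sbT : sb \notin T.
    apply/negP => sT; move: d1; rewrite (down_uniq hsb hpM (lowT _ hsb sT) pM) eqxx.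
    done.
  have saT : sa \notin T.
    apply/negP => sT; move: d2; rewrite (down_uniq hsa hpM (lowT _ hsa sT) pM) eqxx.
    done.
  have pT' : p \in T' by rewrite inT' pT andbT (flip_adj_neq hpM).
  have MT' : M \notin T' by rewrite inT' eqxx.
  have MpC : (M, p) \in C' by rewrite specC' /in_boundary /= flip_adjC hpM pT' MT'.
  exists ((sb, M) |` ((sa, M) |` (C' `\ (M, p)))); split.
  + move=> [x y]; rewrite /in_boundary /= !in_fsetU !in_fset1 in_fsetD1 specC' /in_boundary /= !xpair_eqE !inT'.
    apply/idP/idP.
    * case/orP => [/andP[/eqP-> /eqP->]|/orP[/andP[/eqP-> /eqP->]|/andP[nMp /and3P[fxy /andP[_ yT] xT']]]].
      - by rewrite hsb hM sbT.
      - by rewrite hsa hM saT.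
      - rewrite fxy yT /=; case: (x =P M) => [exM|nxM]; last by move: xT'; case: (x =P M).
        exfalso; subst x.
        have lt : hgt y < hgt M.
          rewrite lt_neqAle maxM // andbT eq_sym; exact: hgt_ne fxy.
        have fyM : flip_adj y M by rewrite flip_adjC.
        have ey := down_uniq fyM hpM lt pM.
        by move: nMp; rewrite ey !eqxx.
    * case/and3P => fxy yT xnT.
      case: (y =P M) => [eyM|nyM].
      - subst y; case: (all x fxy) => ex.
        + by move: xnT; rewrite ex pT.
        + by rewrite ex !eqxx.
        + by rewrite ex !eqxx orbT.
      - have xM : x != M by apply: contraNneq xnT => ->.
        have nyM' : y != M by apply/eqP.
        by rewrite (negbTE xM) fxy /= yT (negbTE xnT) !andbF.
  + have nb1 : (sb, M) \notin (sa, M) |` (C' `\ (M, p)).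
      rewrite in_fsetU in_fset1 in_fsetD1 specC' /in_boundary /= xpair_eqE (negbTE d3) /=.
      by rewrite (negbTE MT') !andbF.
    have nb2 : (sa, M) \notin C' `\ (M, p).
      by rewrite in_fsetD1 specC' /in_boundary /= (negbTE MT') !andbF.
    rewrite big_fsetU1 // big_fsetU1 //=.
    move: sumC'; rewrite (big_fsetD1 _ MpC) /= => sumC'.
    move: (\sum_(i <- C' `\ (M, p)) ps i) sumC' => X sumC'.
    have -> : ps (sb, M) + (ps (sa, M) + X) =
      (ps (p, M) + ps (sb, M) + ps (sa, M)) + (ps (M, p) + X) - (ps (M, p) + ps (p, M)) by ring.
    by rewrite vsum sumC' esum addrK.
Qed.
End Main.


Lemma climb (T : {fset tri}) (p : seq T) : forall prev cur : T,
  down (val cur) (val prev) -> path (fun x y : T => flip_adj (val x) (val y)) cur p ->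
  uniq [:: prev, cur & p] -> exists z : T, down (val (last cur p)) (val z).
Proof.
elim: p => [|nx p IH] prev cur dcp /=; first by exists prev.
case/andP => r pth un.
have nxp : nx != prev.
  by move: un; rewrite /= !inE !negb_or => /andP[/and3P[_ /eqP ? _] _]; apply/eqP => e; subst.
have dn : down (val nx) (val cur).
  have f1 : flip_adj (val nx) (val cur) by move: (r); rewrite flip_adjC.
  apply: (down_up r); apply/negP => /andP[_ lt].
  have f2 : flip_adj (val prev) (val cur) by rewrite flip_adjC; case/andP: dcp.
  have lt2 : hgt (val prev) < hgt (val cur) by case/andP: dcp.
  by move: nxp; rewrite (val_inj (down_uniq f1 f2 lt lt2)) eqxx.
apply: (IH cur nx dn pth).
by move: un => /= /andP[_].
Qed.

Lemma subtree_uroot (T : {fset tri}) : finite_subtree T -> uroot T.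
Proof.
case/andP => _ /forallP hc x y xT yT nx ny.
have := hc [` xT] => /forallP /(_ [` yT]) /connectP [q pq lq].
move: lq; case: (shortenP pq) => q' pq' uq' _ {pq}.
case: q' pq' uq' => [|nx' q''] /= pq' uq' lq.
  by move: (congr1 val lq) => /= ->.
case/andP: pq' => r pth.
have dn : down (val nx') x.
  apply: down_up r _; exact: nx (valP nx').
have dn' : down (val nx') (val [` xT]) by exact: dn.
have [z dz] := @climb T q'' [` xT] nx' dn' pth uq'.
by move: dz; rewrite -lq /= (negbTE (ny (val z) (valP z))).
Qed.

Unset Implicit Arguments.
Set Strict Implicit.

Theorem proposition5p1
  (K : realFieldType)                    (* the body field (reals) *)
  (E : comUnitRingType)                  (* even part of the Grassmann algebra *)
  (body : {rmorphism E -> K})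
  (hunit : forall x : E, (x \is a GRing.unit) = (body x != 0))
  (lam W : iarc -> E)
  (lam_pos : forall e, 0 < body (lam e))
  (W_body : forall e, body (W e) = 0)
  (flip_rel : forall a b c d : iarc,
     flip_adj [fset a; b; c] [fset a; b; d] -> c != d ->
     lam c * lam d = lam a ^+ 2 + lam b ^+ 2 + lam a * lam b * W c)
  (h : E)
  (h_def : forall a b c : iarc, is_tri [fset a; b; c] ->
     h = semi_perimeter lam W a b c)
  (T : {fset tri}) (HT : finite_subtree T) :
  exists C : {fset tri * tri},
    (forall e, (e \in C) = in_boundary T e) /\
    \sum_(e <- C) psi lam W h e = 1.
Proof.
have ur := subtree_uroot HT.
case/andP: HT => /andP[T0 /forallP triT] _.
have triT' : forall t, t \in T -> is_tri t by move=> t tT; exact: (triT [` tT]).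
have [n cn] : exists n, #|` T| = n.+1.
  by move: T0; rewrite -cardfs_gt0; case: #|` T| => // n _; exists n.
exact: (main_ind hunit lam_pos W_body flip_rel h_def cn triT' ur).
Qed.
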